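(* Let $\theta^*\in\mathbb{R}^n$, let $\phi:\mathbb{R}_{\ge0}\to\mathbb{R}^n$ be piecewise continuous with $|\phi(t)|\le M$ for all $t\ge0$ (some $M>0$), and $y^*(t):=\phi^T(t)\theta^*$. Let $t_1,\dots,t_N\ge0$ be such that $\mathcal{D}=[\phi(t_1),\dots,\phi(t_N)]$ has rank $n$. Let $\beta,\gamma,\mu>0$ with $\beta\ge2\gamma/\mu$, $\mathcal{N}_t:=1+\mu\phi^T(t)\phi(t)$, and $$B(\theta,\mu):=\sum_{k=1}^N\frac{\phi(t_k)}{1+\mu\phi^T(t_k)\phi(t_k)}\big(\phi^T(t_k)\theta-y^*(t_k)\big).$$ Then $(\theta^*,\theta^* )$ is uniformly globally asymptotically stable for the system in $(\theta,\vartheta)\in\mathbb{R}^{2n}$ $$\dot\theta=-\beta(\theta-\vartheta),\qquad\dot\vartheta=-\gamma\Big(\frac{1}{\mathcal{N}_t}\phi(t)\big(\phi^T(t)\theta-y^*(t)\big)+B(\theta,\mu)\Big).$$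
   Context: No persistent excitation is assumed. For a system $\dot x=f(x,t)$ with equilibrium $x^*$: uniformly globally stable (UGS) means there is a class-$\mathcal{K}_\infty$ function $\kappa$ with $|x(t)-x^*|\le\kappa(|x_\circ-x^*|)$ for all $t\ge t_\circ$, for every solution from every $(x_\circ,t_\circ)$; uniformly globally attractive (UGA) means for each $r,\sigma>0$ there is $T'>0$ with $|x_\circ-x^*|\le r\Rightarrow|x(t)-x^*|\le\sigma$ for all $t\ge t_\circ+T'$, uniformly in $t_\circ\ge0$; UGAS means UGS and UGA. *)

(* Defs.v *)
From Coquelicot Require Import Coquelicot.
From Stdlib Require Import Reals.
From HB Require Import structures.
From mathcomp Require Import all_boot all_order all_algebra.
From mathcomp Require Import Rstruct.

Set Implicit Arguments.
Unset Strict Implicit.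
Unset Printing Implicit Defensive.
Import Order.TTheory GRing.Theory Num.Theory.
Local Open Scope ring_scope.

Definition dotv (n : nat) (u v : 'cV[R]_n) : R := \sum_(i < n) u i 0 * v i 0.
Definition vnorm (n : nat) (u : 'cV[R]_n) : R := sqrt (dotv u u).

Definition classKinf (k : R -> R) : Prop :=
  k 0 = 0 /\
  (forall s, 0 <= s -> Coquelicot.Continuity.continuous k s) /\
  (forall s1 s2, 0 <= s1 -> s1 < s2 -> k s1 < k s2) /\
  (forall c, exists s, 0 <= s /\ c <= k s).

(* piecewise continuity of phi : [0,+oo) -> R^n: on every bounded interval
   [0,T] there are only finitely many points (the list L) away from which
   every component is continuous, and at those points all one-sided limits
   exist (finite).  The point 0 is treated with its right limit only. *)
Definition piecewise_continuous (n : nat) (phi : R -> 'cV[R]_n) : Prop :=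
  forall T : R, 0 <= T -> exists L : seq R,
    (forall t, 0 < t -> t <= T -> ~ List.In t L ->
       forall i : 'I_n, Coquelicot.Continuity.continuous (fun s => phi s i 0) t) /\
    (forall p, List.In p L -> forall i : 'I_n,
       (exists l : R, filterlim (fun s => phi s i 0) (at_right p) (locally l)) /\
       (0 < p -> exists l : R, filterlim (fun s => phi s i 0) (at_left p) (locally l))) /\
    (forall i : 'I_n, exists l : R, filterlim (fun s => phi s i 0) (at_right 0) (locally l)).

(* (Caratheodory) solution of  dx/dt = F t x  on [t0, +oo) from x(t0) = x0:
   x satisfies the integral equation componentwise (Riemann integral). *)
Definition is_solution (m : nat) (F : R -> 'cV[R]_m -> 'cV[R]_m)
    (t0 : R) (x0 : 'cV[R]_m) (x : R -> 'cV[R]_m) : Prop :=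
  x t0 = x0 /\
  forall t, t0 <= t -> forall i : 'I_m,
    is_RInt (fun s => F s (x s) i 0) t0 t (x t i 0 - x0 i 0).

Definition UGS (m : nat) (F : R -> 'cV[R]_m -> 'cV[R]_m) (xs : 'cV[R]_m) : Prop :=
  exists kappa : R -> R, classKinf kappa /\
    forall t0 x0 x, 0 <= t0 -> is_solution F t0 x0 x ->
      forall t, t0 <= t -> vnorm (x t - xs) <= kappa (vnorm (x0 - xs)).

Definition UGA (m : nat) (F : R -> 'cV[R]_m -> 'cV[R]_m) (xs : 'cV[R]_m) : Prop :=
  forall r sigma : R, 0 < r -> 0 < sigma -> exists T' : R, 0 < T' /\
    forall t0 x0 x, 0 <= t0 -> is_solution F t0 x0 x ->
      vnorm (x0 - xs) <= r ->
      forall t, t0 + T' <= t -> vnorm (x t - xs) <= sigma.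

Definition UGAS (m : nat) (F : R -> 'cV[R]_m -> 'cV[R]_m) (xs : 'cV[R]_m) : Prop :=
  UGS F xs /\ UGA F xs.

Definition ystar (n : nat) (phi : R -> 'cV[R]_n) (ths : 'cV[R]_n) (t : R) : R :=
  dotv (phi t) ths.

Definition Nt (n : nat) (phi : R -> 'cV[R]_n) (mu t : R) : R :=
  1 + mu * dotv (phi t) (phi t).

Definition Bterm (n N : nat) (phi : R -> 'cV[R]_n) (ths : 'cV[R]_n)
    (ts : 'I_N -> R) (th : 'cV[R]_n) (mu : R) : 'cV[R]_n :=
  \sum_(k < N) ((dotv (phi (ts k)) th - ystar phi ths (ts k))
                 / (1 + mu * dotv (phi (ts k)) (phi (ts k)))) *: phi (ts k).

Definition Dmat (n N : nat) (phi : R -> 'cV[R]_n) (ts : 'I_N -> R) : 'M[R]_(n, N) :=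
  \matrix_(i < n, k < N) phi (ts k) i 0.

(* the system in z = (theta, vartheta) in R^(2n), stacked as col_mx theta vartheta *)
Definition sysF (n N : nat) (phi : R -> 'cV[R]_n) (ths : 'cV[R]_n)
    (ts : 'I_N -> R) (beta gamma mu : R) (t : R) (z : 'cV[R]_(n + n)) : 'cV[R]_(n + n) :=
  let th := usubmx z in
  let vth := dsubmx z in
  col_mx (- beta *: (th - vth))
         (- gamma *: (((dotv (phi t) th - ystar phi ths t) / Nt phi mu t) *: phi t
                      + Bterm phi ths ts th mu)).

(* Main.v *)
Require Import Defs.
From Coquelicot Require Import Coquelicot.
From Stdlib Require Import Reals Lra.
From HB Require Import structures.
From mathcomp Require Import all_boot all_order all_algebra.
From mathcomp Require Import Rstruct.
From mathcomp Require Import ring lra.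
Import Order.TTheory GRing.Theory Num.Theory.
Set Implicit Arguments.
Unset Strict Implicit.
Unset Printing Implicit Defensive.
Local Open Scope ring_scope.

Lemma der_add (f g : R -> R) (s df dg : R) : is_derive f s df -> is_derive g s dg ->
  is_derive (fun t => f t + g t) s (df + dg).
Proof. move=> H1 H2. exact: is_derive_plus H1 H2. Qed.
Lemma der_mul (f g : R -> R) (s df dg : R) : is_derive f s df -> is_derive g s dg ->
  is_derive (fun t => f t * g t) s (df * g s + f s * dg).
Proof. move=> H1 H2. exact: (is_derive_mult _ _ _ _ _ H1 H2 Rmult_comm). Qed.
Lemma der_const (c s : R) : is_derive (fun _ => c) s 0.
Proof. exact: is_derive_const. Qed.
Lemma der_opp (f : R -> R) (s df : R) : is_derive f s df -> is_derive (fun t => - f t) s (- df).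
Proof. move=> H; exact: is_derive_opp H. Qed.
Lemma der_sub (f g : R -> R) (s df dg : R) : is_derive f s df -> is_derive g s dg ->
  is_derive (fun t => f t - g t) s (df - dg).
Proof. move=> H1 H2. exact: is_derive_minus H1 H2. Qed.
Lemma der_ext (f g : R -> R) (s df : R) : (forall t, f t = g t) -> is_derive f s df -> is_derive g s df.
Proof. move=> H1 H2. exact: is_derive_ext H1 H2. Qed.
Lemma der_eq (f : R -> R) (s df dg : R) : df = dg -> is_derive f s df -> is_derive f s dg.
Proof. by move=> ->. Qed.

Lemma der_sum k (g : 'I_k -> R -> R) (dg : 'I_k -> R) s :
  (forall i, is_derive (g i) s (dg i)) ->
  is_derive (fun t => \sum_(i < k) g i t) s (\sum_(i < k) dg i).
Proof.
elim: k g dg => [|k IH] g dg H.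
  apply: (der_ext (f := fun _ => 0)) => [t|]; first by rewrite big_ord0.
  rewrite big_ord0; exact: der_const.
apply: (der_ext (f := fun t => \sum_(i < k) g (widen_ord (leqnSn k) i) t + g ord_max t)).
  by move=> t; rewrite big_ord_recr.
rewrite big_ord_recr /=. apply: der_add; last exact: H.
exact: (IH (fun i => g (widen_ord (leqnSn k) i))).
Qed.

Lemma cont_add (f g : R -> R) s : continuous f s -> continuous g s -> continuous (fun t => f t + g t) s.
Proof. move=> H1 H2. exact: continuous_plus H1 H2. Qed.
Lemma cont_mul (f g : R -> R) s : continuous f s -> continuous g s -> continuous (fun t => f t * g t) s.
Proof. move=> H1 H2. exact: continuous_mult H1 H2. Qed.
Lemma cont_const (c s : R) : continuous (fun _ : R => c) s.
Proof. exact: continuous_const. Qed.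
Lemma cont_opp (f : R -> R) s : continuous f s -> continuous (fun t => - f t) s.
Proof. move=> H. exact: continuous_opp H. Qed.
Lemma cont_sub (f g : R -> R) s : continuous f s -> continuous g s -> continuous (fun t => f t - g t) s.
Proof. move=> H1 H2. apply: cont_add H1 _. exact: cont_opp. Qed.
Lemma cont_ext (f g : R -> R) s : (forall t, f t = g t) -> continuous f s -> continuous g s.
Proof. move=> H1 H2. exact: continuous_ext H1 H2. Qed.
Lemma cont_sum k (g : 'I_k -> R -> R) s :
  (forall i, continuous (g i) s) -> continuous (fun t => \sum_(i < k) g i t) s.
Proof.
elim: k g => [|k IH] g H.
  apply: (cont_ext (f := fun _ => 0)) => [t|]; first by rewrite big_ord0.
  exact: cont_const.
apply: (cont_ext (f := fun t => \sum_(i < k) g (widen_ord (leqnSn k) i) t + g ord_max t)).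
  by move=> t; rewrite big_ord_recr.
apply: cont_add; last exact: H.
exact: (IH (fun i => g (widen_ord (leqnSn k) i))).
Qed.

Definition vder k (y : R -> 'cV[R]_k) s (v : 'cV[R]_k) :=
  forall i, is_derive (fun t => y t i 0) s (v i 0).
Definition vcont k (y : R -> 'cV[R]_k) s :=
  forall i, continuous (fun t => y t i 0) s.

Lemma der_dotv k (u w : R -> 'cV[R]_k) s u' w' : vder u s u' -> vder w s w' ->
  is_derive (fun t => dotv (u t) (w t)) s (dotv u' (w s) + dotv (u s) w').
Proof.
move=> Hu Hw. rewrite /dotv -big_split /=.
apply: der_sum => i. exact: der_mul.
Qed.
Lemma cont_dotv k (u w : R -> 'cV[R]_k) s : vcont u s -> vcont w s ->
  continuous (fun t => dotv (u t) (w t)) s.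
Proof. move=> Hu Hw. rewrite /dotv. apply: cont_sum => i. exact: cont_mul. Qed.

Lemma vder_const k (c : 'cV[R]_k) s : vder (fun _ => c) s 0.
Proof. move=> i; rewrite mxE; exact: der_const. Qed.
Lemma vcont_const k (c : 'cV[R]_k) s : vcont (fun _ => c) s.
Proof. move=> i; exact: cont_const. Qed.
Lemma vder_sub k (u w : R -> 'cV[R]_k) s u' w' : vder u s u' -> vder w s w' ->
  vder (fun t => u t - w t) s (u' - w').
Proof. move=> Hu Hw i. rewrite !mxE. apply: (der_ext (f := fun t => u t i 0 - w t i 0)).
  by move=> t; rewrite !mxE. exact: der_sub. Qed.
Lemma vcont_sub k (u w : R -> 'cV[R]_k) s : vcont u s -> vcont w s ->
  vcont (fun t => u t - w t) s.
Proof. move=> Hu Hw i. apply: (cont_ext (f := fun t => u t i 0 - w t i 0)).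
  by move=> t; rewrite !mxE. exact: cont_sub. Qed.
Lemma vder_u n (y : R -> 'cV[R]_(n + n)) s v : vder y s v ->
  vder (fun t => usubmx (y t)) s (usubmx v).
Proof. move=> H i. rewrite mxE. apply: (der_ext (f := fun t => y t (lshift n i) 0)).
  by move=> t; rewrite mxE. exact: H. Qed.
Lemma vder_d n (y : R -> 'cV[R]_(n + n)) s v : vder y s v ->
  vder (fun t => dsubmx (y t)) s (dsubmx v).
Proof. move=> H i. rewrite mxE. apply: (der_ext (f := fun t => y t (rshift n i) 0)).
  by move=> t; rewrite mxE. exact: H. Qed.
Lemma vcont_u n (y : R -> 'cV[R]_(n + n)) s : vcont y s -> vcont (fun t => usubmx (y t)) s.
Proof. move=> H i. apply: (cont_ext (f := fun t => y t (lshift n i) 0)).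
  by move=> t; rewrite mxE. exact: H. Qed.
Lemma vcont_d n (y : R -> 'cV[R]_(n + n)) s : vcont y s -> vcont (fun t => dsubmx (y t)) s.
Proof. move=> H i. apply: (cont_ext (f := fun t => y t (rshift n i) 0)).
  by move=> t; rewrite mxE. exact: H. Qed.

Section Dot.
Variable k : nat.
Implicit Types u v w : 'cV[R]_k.
Lemma dotvC u v : dotv u v = dotv v u.
Proof. by apply: eq_bigr => i _; rewrite mulrC. Qed.
Lemma dotvDl u v w : dotv (u + v) w = dotv u w + dotv v w.
Proof. rewrite /dotv -big_split; apply: eq_bigr => i _; by rewrite mxE mulrDl. Qed.
Lemma dotvBl u v w : dotv (u - v) w = dotv u w - dotv v w.
Proof. rewrite /dotv -sumrB; apply: eq_bigr => i _; by rewrite !mxE mulrBl. Qed.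
Lemma dotvZl a u w : dotv (a *: u) w = a * dotv u w.
Proof. rewrite /dotv mulr_sumr; apply: eq_bigr => i _; by rewrite mxE mulrA. Qed.
Lemma dotvNl u w : dotv (- u) w = - dotv u w.
Proof. rewrite /dotv -sumrN; apply: eq_bigr => i _; by rewrite mxE mulNr. Qed.
Lemma dotvDr u v w : dotv w (u + v) = dotv w u + dotv w v.
Proof. by rewrite dotvC dotvDl !(dotvC w). Qed.
Lemma dotvBr u v w : dotv w (u - v) = dotv w u - dotv w v.
Proof. by rewrite dotvC dotvBl !(dotvC w). Qed.
Lemma dotvZr a u w : dotv w (a *: u) = a * dotv w u.
Proof. by rewrite dotvC dotvZl dotvC. Qed.
Lemma dotvNr u w : dotv w (- u) = - dotv w u.
Proof. by rewrite dotvC dotvNl dotvC. Qed.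
Lemma dotv_suml I (r : seq I) (P : pred I) (F : I -> 'cV[R]_k) w :
  dotv (\sum_(i <- r | P i) F i) w = \sum_(i <- r | P i) dotv (F i) w.
Proof.
elim/big_rec2: _ => [|i y1 y2 _ <-]; last by rewrite dotvDl.
by rewrite /dotv big1 // => i _; rewrite mxE mul0r.
Qed.
Lemma dotv_ge0 u : 0 <= dotv u u.
Proof. apply: sumr_ge0 => i _; by rewrite -expr2 sqr_ge0. Qed.
Lemma dotv_eq0 u : dotv u u = 0 -> forall w, dotv u w = 0.
Proof.
move=> H0 w. have H := psumr_eq0P (P := xpredT) (fun i _ => sqr_ge0 (u i 0)).
rewrite /dotv big1 // => i _.
have /eqP : u i 0 ^+ 2 = 0 by apply: H => //; rewrite -H0; apply: eq_bigr => j _; rewrite expr2.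
by rewrite sqrf_eq0 => /eqP ->; rewrite mul0r.
Qed.
Lemma CS u v : dotv u v ^+ 2 <= dotv u u * dotv v v.
Proof.
have [H0|Hp] := eqVneq (dotv u u) 0.
  by rewrite (dotv_eq0 H0) H0 expr0n mul0r.
have Hpos : 0 < dotv u u by rewrite lt0r Hp dotv_ge0.
have := dotv_ge0 (dotv u u *: v - dotv u v *: u).
rewrite !(dotvBl, dotvBr, dotvZl, dotvZr) (dotvC v u) => H.
have : 0 <= dotv u u * (dotv u u * dotv v v - dotv u v ^+ 2) by lra.
by rewrite pmulr_rge0 // subr_ge0.
Qed.
End Dot.

Lemma rank_lb n N (phi : R -> 'cV[R]_n) (ts : 'I_N -> R) :
  \rank (Dmat phi ts) = n ->
  exists c, 0 < c /\ forall e : 'cV[R]_n,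
    c * dotv e e <= \sum_(k < N) dotv (phi (ts k)) e ^+ 2.
Proof.
move=> Hr. set D := Dmat phi ts.
have Hf : row_full D^T by rewrite /row_full mxrank_tr Hr.
set P := pinvmx D^T.
have HP : P *m D^T = 1%:M := mulVpmx Hf.
set CP := \sum_(i < n) \sum_(k < N) P i k ^+ 2.
have CP0 : 0 <= CP by apply: sumr_ge0 => i _; apply: sumr_ge0 => k _; exact: sqr_ge0.
exists (CP + 1)^-1; split; first by rewrite invr_gt0; lra.
move=> e. set w := D^T *m e.
have Hw : forall k, w k 0 = dotv (phi (ts k)) e.
  by move=> k; rewrite /w mxE /dotv; apply: eq_bigr => i _; rewrite !mxE.
have He : e = P *m w by rewrite /w mulmxA HP mul1mx.
have HW : \sum_(k < N) dotv (phi (ts k)) e ^+ 2 = dotv w w.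
  by rewrite /dotv; apply: eq_bigr => k _; rewrite Hw expr2.
rewrite HW.
have Hle : dotv e e <= CP * dotv w w.
  rewrite /CP mulr_suml /dotv; apply: ler_sum => i _.
  have Hc : dotv (\col_k P i k) w = (P *m w) i 0.
    by rewrite [RHS]mxE; apply: eq_bigr => j _; rewrite mxE.
  have -> : e i 0 * e i 0 = dotv (\col_k P i k) w ^+ 2 by rewrite Hc -He expr2.
  have := CS (\col_k P i k) w.
  rewrite /dotv. under [X in _ <= X * _ -> _]eq_bigr => k _ do rewrite mxE -expr2. done.
have Hww := dotv_ge0 w.
rewrite ler_pdivrMl; last lra.
nra.
Qed.

Lemma dsq_lin k (e v : 'cV[R]_k) a b : dotv (a *: e + b *: v) (a *: e + b *: v) =
  a ^+ 2 * dotv e e + 2 * a * b * dotv e v + b ^+ 2 * dotv v v.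
Proof. rewrite !(dotvDl, dotvDr, dotvZl, dotvZr) (dotvC v e). ring. Qed.
Lemma dsq_sub k (e v : 'cV[R]_k) : dotv (e - v) (e - v) = dotv e e - 2 * dotv e v + dotv v v.
Proof. rewrite !(dotvBl, dotvBr) (dotvC v e). ring. Qed.

Lemma vcont_add k (u w : R -> 'cV[R]_k) s : vcont u s -> vcont w s ->
  vcont (fun t => u t + w t) s.
Proof. move=> Hu Hw i. apply: (cont_ext (f := fun t => u t i 0 + w t i 0)).
  by move=> t; rewrite !mxE. exact: cont_add. Qed.
Lemma vcont_scale k (c : R -> R) (u : R -> 'cV[R]_k) s : continuous c s -> vcont u s ->
  vcont (fun t => c t *: u t) s.
Proof. move=> Hc Hu i. apply: (cont_ext (f := fun t => c t * u t i 0)).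
  by move=> t; rewrite !mxE. exact: cont_mul. Qed.
Lemma vcont_sum k M (g : 'I_M -> R -> 'cV[R]_k) s : (forall j, vcont (g j) s) ->
  vcont (fun t => \sum_(j < M) g j t) s.
Proof. move=> H i. apply: (cont_ext (f := fun t => \sum_(j < M) g j t i 0)).
  by move=> t; rewrite summxE. apply: cont_sum => j; exact: H. Qed.
Lemma vcont_col n (a b : R -> 'cV[R]_n) s : vcont a s -> vcont b s ->
  vcont (fun t => col_mx (a t) (b t)) s.
Proof.
move=> Ha Hb i.
apply: (cont_ext (f := fun t => match split i with inl j => a t j 0 | inr j => b t j 0 end)).
  by move=> t; rewrite mxE.
by case: (split i) => j.
Qed.

Notation O1 := (0 : 'I_1).
Section Ana.
Local Open Scope R_scope.



Lemma lip_cont (g : R -> R) s K : 0 <= K ->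
  (forall t, Rabs (t - s) < 1 -> Rabs (g t - g s) <= K * Rabs (t - s)) -> continuous g s.
Proof.
move=> HK H. apply/continuity_pt_filterlim.
rewrite /continuity_pt /continue_in /limit1_in /limit_in => eps Heps.
exists (Rmin 1 (eps / (K + 1))); split.
  apply: Rmin_pos; first Lra.lra. apply: Rdiv_lt_0_compat; Lra.lra.
move=> y [_ Hy]. rewrite /R_dist /= /R_dist in Hy *.
have H1 : Rabs (y - s) < 1 by apply: Rlt_le_trans Hy (Rmin_l _ _).
have H2 : Rabs (y - s) < eps / (K + 1) by apply: Rlt_le_trans Hy (Rmin_r _ _).
apply: Rle_lt_trans (H y H1) _.
have H3 : Rabs (y - s) * (K + 1) < eps.
  have H4 := Rmult_lt_compat_r (K + 1) _ _ ltac:(Lra.lra) H2.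
  rewrite /Rdiv Rmult_assoc Rinv_l in H4; Lra.lra.
have := Rabs_pos (y - s). Lra.nra.
Qed.

Lemma Rmax_lip t s a : Rabs (Rmax t a - Rmax s a) <= Rabs (t - s).
Proof.
rewrite /Rmax. case: (Rle_dec t a); case: (Rle_dec s a) => H1 H2.
- rewrite Rminus_diag Rabs_R0; exact: Rabs_pos.
- rewrite !Rabs_left1; Lra.lra.
- rewrite !Rabs_right; Lra.lra.
- Lra.lra.
Qed.


Lemma mono_nil (h : R -> R) a b : a <= b -> (forall t, a <= t <= b -> continuity_pt h t) ->
  (forall t, a < t < b -> exists d, is_derive h t d /\ d <= 0) -> h b <= h a.
Proof.
move=> Hab Hc Hd.
have H1 : forall t, Rmin a b < t < Rmax a b -> is_derive h t (Rmin 0 (Derive h t)).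
  rewrite Rmin_left ?Rmax_right // => t Ht.
  have [d [Hd1 Hd2]] := Hd t Ht.
  by rewrite (is_derive_unique _ _ _ Hd1) Rmin_right.
have H2 : forall t, Rmin a b <= t <= Rmax a b -> continuity_pt h t.
  by rewrite Rmin_left ?Rmax_right.
have [c [Hc1 Hc2]] := MVT_gen h a b (fun t => Rmin 0 (Derive h t)) H1 H2.
have H0 : Rmin 0 (Derive h c) <= 0 by apply: Rmin_l.
have : Rmin 0 (Derive h c) * (b - a) <= 0.
  apply: Rmult_le_0_r => //; Lra.lra.
Lra.lra.
Qed.

Lemma mono_exc (h : R -> R) (L : list R) : forall a b, a <= b ->
  (forall t, a <= t <= b -> continuity_pt h t) ->
  (forall t, a < t < b -> ~ List.In t L -> exists d, is_derive h t d /\ d <= 0) -> h b <= h a.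
Proof.
elim: L => [|p L IH] a b Hab Hc Hd.
  apply: mono_nil => // t Ht. exact: Hd.
case: (Rlt_dec a p) => Hap; last first.
  apply: IH => // t Ht Hn. apply: Hd => // [[Hp|//]]; Lra.lra.
case: (Rlt_dec p b) => Hpb; last first.
  apply: IH => // t Ht Hn. apply: Hd => // [[Hp|//]]; Lra.lra.
apply: (Rle_trans _ (h p)).
  apply: IH; first Lra.lra.
    move=> t Ht; apply: Hc; Lra.lra.
  move=> t Ht Hn. apply: Hd; first Lra.lra. move=> [Hp|//]; Lra.lra.
apply: IH; first Lra.lra.
  move=> t Ht; apply: Hc; Lra.lra.
move=> t Ht Hn. apply: Hd; first Lra.lra. move=> [Hp|//]; Lra.lra.
Qed.

Section Sol.
Local Open Scope R_scope.
Variables (m : nat) (F : R -> 'cV[R]_m -> 'cV[R]_m) (t0 : R) (x0 : 'cV[R]_m) (x : R -> 'cV[R]_m).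
Hypothesis Hsol : is_solution F t0 x0 x.

Lemma sol_int t i : t0 <= t -> is_RInt (fun s => F s (x s) i O1) t0 t (x t i O1 - x0 i O1).
Proof. move=> Ht. case: Hsol => _ H. apply: H. by apply/RleP. Qed.

Lemma sol_lip i T : t0 <= T -> exists K, 0 <= K /\ forall s t, t0 <= s <= T -> t0 <= t <= T ->
  Rabs (x t i O1 - x s i O1) <= K * Rabs (t - s).
Proof.
move=> HT. have Hex : ex_RInt (fun s => F s (x s) i O1) t0 T by eexists; apply: sol_int.
have [M HM] := ex_RInt_ub _ _ _ Hex.
exists (Rmax M 0); split; first by apply: Rmax_r.
have key : forall s t, t0 <= s <= t -> t <= T -> Rabs (x t i O1 - x s i O1) <= Rmax M 0 * (t - s).
  move=> s t Hs HtT.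
  have Ht : ex_RInt (fun s => F s (x s) i O1) t0 t by eexists; apply: sol_int; Lra.lra.
  have Hst : ex_RInt (fun s => F s (x s) i O1) s t by apply: (ex_RInt_Chasles_2 _ t0) => //; Lra.lra.
  have Hts : ex_RInt (fun s => F s (x s) i O1) t0 s by eexists; apply: sol_int; Lra.lra.
  have HC := RInt_Chasles _ _ _ _ Hts Hst.
  rewrite (is_RInt_unique _ _ _ _ (sol_int (t := s) (i := i) _)) in HC; last Lra.lra.
  rewrite (is_RInt_unique _ _ _ _ (sol_int (t := t) (i := i) _)) in HC; last Lra.lra.
  have -> : x t i O1 - x s i O1 = RInt (fun s => F s (x s) i O1) s t.
    have HC2 : (x s i O1 - x0 i O1) + RInt (fun s => F s (x s) i O1) s t = x t i O1 - x0 i O1 := HC.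
    Lra.lra.
  rewrite Rmult_comm. apply: (abs_RInt_le_const _ s t) => //; first Lra.lra.
  move=> u Hu. apply: Rle_trans (Rmax_l M 0). apply: HM.
  rewrite Rmin_left ?Rmax_right; Lra.lra.
move=> s t Hs Ht. case: (Rle_dec s t) => Hc.
  rewrite (Rabs_right (t - s)); last Lra.lra. apply: key; Lra.lra.
rewrite -Rabs_Ropp Ropp_minus_distr (Rabs_left (t - s)); last Lra.lra.
have := key t s. move=> /(_ _ _). Lra.lra.
Qed.

Lemma sol_cont i s : t0 <= s -> continuous (fun t => x (Rmax t t0) i O1) s.
Proof.
move=> Hs. have [K [HK HL]] := sol_lip i (T := s + 1) ltac:(Lra.lra).
apply: (lip_cont (K := K)) => // t Ht.
have Hm := Rmax_lip t s t0.
have Hs' : Rmax s t0 = s by rewrite Rmax_left; Lra.lra.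
rewrite Hs' in Hm. rewrite -{2}Hs'.
apply: Rle_trans (HL _ _ _ _) _.
- split; [exact: Rmax_r|]. rewrite Hs'; Lra.lra.
- split; [exact: Rmax_r|]. apply: Rmax_lub; move: Ht; rewrite /Rabs; case: Rcase_abs; Lra.lra.
- rewrite Hs'. apply: Rmult_le_compat_l => //.
Qed.

Lemma sol_der i s : t0 < s -> continuous (fun u => F u (x u) i O1) s ->
  is_derive (fun t => x (Rmax t t0) i O1) s (F s (x s) i O1).
Proof.
move=> Hs Hc.
have H1 : is_derive (fun b => x b i O1 - x0 i O1) s (F s (x s) i O1).
  apply: is_derive_RInt Hc.
  exists (mkposreal _ (Rlt_Rminus _ _ Hs)) => b Hb. apply: sol_int.
  have Hb' : Rabs (b - s) < s - t0 := Hb.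
  have := Rabs_def2 _ _ Hb'. Lra.lra.
apply: (is_derive_ext_loc (fun b => x b i O1 - x0 i O1 + x0 i O1)).
  exists (mkposreal _ (Rlt_Rminus _ _ Hs)) => b Hb.
  have Hb' : Rabs (b - s) < s - t0 := Hb.
  have Hb2 := Rabs_def2 _ _ Hb'.
  rewrite Rmax_left; Lra.lra.
have := is_derive_plus _ _ _ _ _ H1 (is_derive_const (x0 i O1) s).
rewrite /plus /zero /=. by rewrite Rplus_0_r.
Qed.
End Sol.

End Ana.

Section Alg.
Variables (n N : nat) (ths : 'cV[R]_n) (phi : R -> 'cV[R]_n) (ts : 'I_N -> R)
  (beta gamma mu : R).
Hypotheses (Hb : 0 < beta) (Hg : 0 < gamma) (Hm : 0 < mu) (Hbg : 2 * gamma / mu <= beta).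

Ltac hyps := have ? := Hb; have ? := Hg; have ? := Hm; have ? := Hbg.
Definition qk (k : 'I_N) : R := (1 + mu * dotv (phi (ts k)) (phi (ts k)))^-1.
Definition ee (x : 'cV[R]_(n + n)) := usubmx x - ths.
Definition ve (x : 'cV[R]_(n + n)) := dsubmx x - ths.
Definition Qf (e : 'cV[R]_n) := \sum_(k < N) qk k * (dotv (phi (ts k)) e * dotv (phi (ts k)) e).
Definition Vf (x : 'cV[R]_(n + n)) :=
  dotv (ve x) (ve x) - dotv (ve x) (ee x) + dotv (ee x) (ee x) / 2 + gamma / beta * Qf (ee x).
Definition dVf (x v : 'cV[R]_(n + n)) :=
  (dotv (dsubmx v) (ve x) + dotv (ve x) (dsubmx v))
  - (dotv (dsubmx v) (ee x) + dotv (ve x) (usubmx v))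
  + (dotv (usubmx v) (ee x) + dotv (ee x) (usubmx v)) / 2
  + gamma / beta * \sum_(k < N) qk k * (dotv (phi (ts k)) (usubmx v) * dotv (phi (ts k)) (ee x)
                     + dotv (phi (ts k)) (ee x) * dotv (phi (ts k)) (usubmx v)).

Lemma qk_gt0 k : 0 < qk k.
Proof. hyps. rewrite /qk invr_gt0. have H := dotv_ge0 (phi (ts k)). nra. Qed.
Lemma qk_le1 k : qk k <= 1.
Proof. hyps. have ? := dotv_ge0 (phi (ts k)). rewrite /qk invf_le1; nra. Qed.

Definition Phi := \sum_(k < N) dotv (phi (ts k)) (phi (ts k)).
Lemma Phi_ge0 : 0 <= Phi.
Proof. apply: sumr_ge0 => k _; exact: dotv_ge0. Qed.
Lemma qk_ge k : (1 + mu * Phi)^-1 <= qk k.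
Proof.
hyps. rewrite /qk lef_pV2 ?posrE; first last.
- have ? := dotv_ge0 (phi (ts k)). nra.
- have ? := Phi_ge0. nra.
have : dotv (phi (ts k)) (phi (ts k)) <= Phi.
  rewrite /Phi (bigD1 k) //= lerDl; apply: sumr_ge0 => j _; exact: dotv_ge0.
nra.
Qed.

Lemma Qf_ub e : Qf e <= Phi * dotv e e.
Proof.
rewrite /Qf /Phi mulr_suml; apply: ler_sum => k _.
have H1 := CS (phi (ts k)) e. rewrite expr2 in H1. have ? := qk_le1 k. have ? := qk_gt0 k. have ? := dotv_ge0 (phi (ts k)). have ? := dotv_ge0 e. nra.
Qed.
Lemma Qf_ge0 e : 0 <= Qf e.
Proof. apply: sumr_ge0 => k _. apply: mulr_ge0; first exact: ltW (qk_gt0 k).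
  rewrite -expr2; exact: sqr_ge0. Qed.
Lemma Qf_lb c e : (forall e, c * dotv e e <= \sum_(k < N) dotv (phi (ts k)) e ^+ 2) ->
  (1 + mu * Phi)^-1 * c * dotv e e <= Qf e.
Proof.
hyps. move=> H. rewrite -mulrA. apply: le_trans (ler_wpM2l _ (H e)) _.
  by rewrite invr_ge0; have ? := Phi_ge0; nra.
rewrite mulr_sumr /Qf; apply: ler_sum => k _. rewrite -expr2.
apply: ler_wpM2r; [exact: sqr_ge0 | exact: qk_ge].
Qed.
Definition FF t x := sysF phi ths ts beta gamma mu t x.
Definition Ninv t := (Nt phi mu t)^-1.
Definition Sk (e w : 'cV[R]_n) := \sum_(k < N) qk k * dotv (phi (ts k)) e * dotv (phi (ts k)) w.

Lemma uF t x : usubmx (FF t x) = - beta *: (ee x - ve x).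
Proof. rewrite /FF /sysF col_mxKu /ee /ve. congr (_ *: _). by rewrite opprB addrA subrK. Qed.

Lemma dF t x : dsubmx (FF t x) = - gamma *: ((dotv (phi t) (ee x) * Ninv t) *: phi t
   + \sum_(k < N) (qk k * dotv (phi (ts k)) (ee x)) *: phi (ts k)).
Proof.
rewrite /FF /sysF col_mxKd /ee /Ninv /ystar dotvBr. congr (_ *: (_ + _)).
rewrite /Bterm; apply: eq_bigr => k _. by rewrite /ystar dotvBr mulrC.
Qed.

Lemma dotv_dF t x w : dotv (dsubmx (FF t x)) w =
  - gamma * (dotv (phi t) (ee x) * Ninv t * dotv (phi t) w + Sk (ee x) w).
Proof.
rewrite dF dotvZl dotvDl dotvZl dotv_suml. congr (_ * (_ + _)).
by apply: eq_bigr => k _; rewrite dotvZl.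
Qed.
Lemma dotv_uF t x w : dotv (usubmx (FF t x)) w = - beta * (dotv (ee x) w - dotv (ve x) w).
Proof. by rewrite uF dotvZl dotvBl. Qed.

Lemma dV_eq t x : dVf x (FF t x) =
  gamma * Ninv t * (dotv (phi t) (ee x) ^+ 2 - 2 * dotv (phi t) (ee x) * dotv (phi t) (ve x))
  - gamma * Sk (ee x) (ee x)
  - beta * dotv (ee x - ve x) (ee x - ve x).
Proof.
hyps.
rewrite /dVf (dotvC (ve x) (dsubmx _)) (dotvC (ee x) (usubmx _)) (dotvC (ve x) (usubmx _)) !dotv_dF !dotv_uF.
have -> : \sum_(k < N) qk k * (dotv (phi (ts k)) (usubmx (FF t x)) * dotv (phi (ts k)) (ee x) +
          dotv (phi (ts k)) (ee x) * dotv (phi (ts k)) (usubmx (FF t x)))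
   = - 2 * beta * (Sk (ee x) (ee x) - Sk (ee x) (ve x)).
  rewrite /Sk -sumrB mulr_sumr; apply: eq_bigr => k _.
  rewrite !(dotvC (phi (ts k)) (usubmx _)) !dotv_uF !(dotvC (ee x)) !(dotvC (ve x)). ring.
rewrite (dotvBl (ee x) (ve x)) !(dotvBr (ee x) (ve x)) (dotvC (ve x) (ee x)).
set A := Sk _ _. set B := Sk _ _.
set a := dotv (phi t) _. set b := dotv (phi t) _.
field. lra.
Qed.
Lemma NtE t : Nt phi mu t = 1 + mu * dotv (phi t) (phi t).
Proof. reflexivity. Qed.
Lemma Ninv_ge0 t : 0 <= Ninv t.
Proof. hyps. have ? := dotv_ge0 (phi t). rewrite /Ninv NtE invr_ge0. nra. Qed.
Lemma Ninv_pp t : Ninv t * dotv (phi t) (phi t) <= mu^-1.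
Proof.
hyps. have Hp := dotv_ge0 (phi t). move: Hp. rewrite /Ninv NtE.
set p := dotv _ _ => Hp. rewrite mulrC ler_pdivrMr; last nra.
rewrite mulrDr mulr1 mulrA mulVf; last by rewrite gt_eqF.
rewrite mul1r lerDr invr_ge0; lra.
Qed.

Lemma dV_bound c t x : (forall e, c * dotv e e <= \sum_(k < N) dotv (phi (ts k)) e ^+ 2) ->
  dVf x (FF t x) <= - (gamma * ((1 + mu * Phi)^-1 * c)) * dotv (ee x) (ee x)
                    - beta / 2 * dotv (ee x - ve x) (ee x - ve x).
Proof.
hyps. move=> Hc. rewrite dV_eq.
have h1 : dotv (phi t) (ee x) ^+ 2 - 2 * dotv (phi t) (ee x) * dotv (phi t) (ve x)
    <= dotv (phi t) (phi t) * dotv (ee x - ve x) (ee x - ve x).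
  have := CS (phi t) (ee x - ve x). rewrite dotvBr.
  have := sqr_ge0 (dotv (phi t) (ve x)). move=> ? ?. nra.
have h2 := Ninv_ge0 t. have h3 := Ninv_pp t.
have h4 : gamma * mu^-1 <= beta / 2.
  have : 2 * gamma / mu <= beta by []. rewrite -mulrA. lra.
have h5 : (1 + mu * Phi)^-1 * c * dotv (ee x) (ee x) <= Sk (ee x) (ee x).
  apply: le_trans (Qf_lb (ee x) Hc) _. rewrite /Qf /Sk le_eqVlt; apply/orP; left; apply/eqP.
  by apply: eq_bigr => k _; rewrite mulrA.
have h6 := dotv_ge0 (ee x - ve x).
set zz := dotv (ee x - ve x) _ in h1 h6 *.
set pp := dotv (phi t) (phi t) in h1 h3 *.
set E := _ - _ in h1 *.
have h7 : Ninv t * E <= Ninv t * pp * zz by rewrite -mulrA; apply: ler_wpM2l.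
have h8 : Ninv t * pp * zz <= mu^-1 * zz by apply: ler_wpM2r.
have h9 : gamma * (mu^-1 * zz) <= beta / 2 * zz by rewrite mulrA; apply: ler_wpM2r.
have h10 : gamma * (Ninv t * E) <= gamma * (mu^-1 * zz).
  apply: ler_wpM2l; [lra | exact: le_trans h7 h8].
have h11 : gamma * ((1 + mu * Phi)^-1 * c * dotv (ee x) (ee x)) <= gamma * Sk (ee x) (ee x).
  apply: ler_wpM2l; [lra | exact: h5].
move: h10 h11 h9. rewrite !mulrA. lra.
Qed.
Lemma Vlow x : (dotv (ee x) (ee x) + dotv (ve x) (ve x)) / 6 <= Vf x.
Proof.
hyps. rewrite /Vf.
have h := dotv_ge0 ((-(3/5)) *: ee x + 1 *: ve x). rewrite dsq_lin (dotvC (ee x)) in h.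
have h2 := Qf_ge0 (ee x). have h3 : 0 <= gamma / beta by apply: divr_ge0; lra.
have h4 : 0 <= gamma / beta * Qf (ee x) by apply: mulr_ge0.
have ? := dotv_ge0 (ee x). rewrite !expr2 in h. lra.
Qed.

Definition c2 := 2 + gamma / beta * Phi.
Lemma c2_gt0 : 0 < c2.
Proof. hyps. have ? := Phi_ge0. have h3 : 0 <= gamma / beta by apply: divr_ge0; lra.
  rewrite /c2. have := mulr_ge0 h3 Phi_ge0. lra. Qed.
Lemma Vup x : Vf x <= c2 * (dotv (ee x) (ee x) + dotv (ve x) (ve x)).
Proof.
hyps. rewrite /Vf /c2.
have h := dotv_ge0 (1 *: ee x + 1 *: ve x). rewrite dsq_lin (dotvC (ee x)) in h.
have h2 := Qf_ub (ee x). have h3 : 0 <= gamma / beta by apply: divr_ge0; lra.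
have h4 : gamma / beta * Qf (ee x) <= gamma / beta * (Phi * dotv (ee x) (ee x)) by apply: ler_wpM2l.
have h5 := dotv_ge0 (ee x). have h6 := dotv_ge0 (ve x).
have h7 := mulr_ge0 h3 Phi_ge0.
have h8 : 0 <= gamma / beta * Phi * dotv (ve x) (ve x) by apply: mulr_ge0.
rewrite mulrA in h4. lra.
Qed.

Lemma dV_bound2 c t x : 0 < c -> (forall e, c * dotv e e <= \sum_(k < N) dotv (phi (ts k)) e ^+ 2) ->
  dVf x (FF t x) <= - (Num.min (gamma * ((1 + mu * Phi)^-1 * c)) (beta / 2) / 3 / c2) * Vf x.
Proof.
hyps. move=> c0 Hc. have h := dV_bound t x Hc.
set m := Num.min _ _.
have hq : 0 < gamma * ((1 + mu * Phi)^-1 * c).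
  apply: mulr_gt0 => //; apply: mulr_gt0 => //; rewrite invr_gt0; have := Phi_ge0; nra.
have hm1 : m <= gamma * ((1 + mu * Phi)^-1 * c) by rewrite ge_min lexx.
have hm2 : m <= beta / 2 by rewrite ge_min lexx orbT.
have hm0 : 0 < m by rewrite lt_min hq /=; lra.
have hz := dotv_ge0 (2 *: ee x + (-1) *: ve x). rewrite dsq_lin (dotvC (ee x)) in hz.
rewrite dsq_sub (dotvC (ee x) (ve x)) in h.
have hu := dotv_ge0 (ee x). have hw := dotv_ge0 (ve x).
have hzz := dotv_ge0 (ee x - ve x). rewrite dsq_sub (dotvC (ee x) (ve x)) in hzz.
set u := dotv (ee x) (ee x) in h hz hu hzz *.
set w := dotv (ve x) (ve x) in h hz hw hzz *.
set d := dotv (ve x) (ee x) in h hz hzz *.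
set q := gamma * _ in h hm1 hq *.
have e1 : - q * u <= - m * u by rewrite !mulNr lerN2; apply: ler_wpM2r.
have e2 : - (beta / 2) * (u - 2 * d + w) <= - m * (u - 2 * d + w).
  rewrite !mulNr lerN2; apply: ler_wpM2r => //; lra.
have e3 : dVf x (FF t x) <= - (m / 3) * (u + w) by nra.
have e4 := Vup x. fold u w in e4.
have hc2 := c2_gt0.
have e5 : (m / 3 / c2) * Vf x <= (m / 3 / c2) * (c2 * (u + w)).
  apply: ler_wpM2l => //; apply: divr_ge0; [apply: divr_ge0|]; lra.
have e6 : (m / 3 / c2) * (c2 * (u + w)) = (m / 3) * (u + w).
  by rewrite mulrA -(mulrA (m / 3)) mulVf ?mulr1 // gt_eqF.
lra.
Qed.
Lemma vder_eq k (y : R -> 'cV[R]_k) s v v' : v = v' -> vder y s v -> vder y s v'.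
Proof. by move=> ->. Qed.

Lemma der_V (y : R -> 'cV[R]_(n + n)) s v : vder y s v ->
  is_derive (fun t => Vf (y t)) s (dVf (y s) v).
Proof.
move=> Hy.
have He : vder (fun t => ee (y t)) s (usubmx v).
  apply: vder_eq (vder_sub (vder_u Hy) (vder_const ths s)); by rewrite subr0.
have Hv : vder (fun t => ve (y t)) s (dsubmx v).
  apply: vder_eq (vder_sub (vder_d Hy) (vder_const ths s)); by rewrite subr0.
rewrite /Vf /dVf.
apply: der_add; last first.
  apply: is_derive_scal. rewrite /Qf. apply: der_sum => k.
  apply: (der_eq _ (is_derive_scal _ _ _ _ _)); last first.
    apply: der_mul; exact: (der_dotv (vder_const (phi (ts k)) s) He).
  rewrite /= /dotv big1; last by move=> i _; rewrite mxE mul0r.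
  by rewrite !add0r.
apply: der_add; last first.
  apply: (der_eq _ (der_mul (der_dotv He He) (der_const (2^-1) s))).
  by rewrite mulr0 addr0.
apply: der_sub; exact: der_dotv.
Qed.
Lemma vcont_F (y : R -> 'cV[R]_(n + n)) s : vcont y s -> vcont phi s ->
  vcont (fun t => FF t (y t)) s.
Proof.
hyps. move=> Hy Hp. rewrite /FF /sysF /ystar.
have Hu := vcont_u Hy. have Hd := vcont_d Hy.
apply: vcont_col.
  apply: vcont_scale; first exact: cont_const. exact: vcont_sub.
apply: vcont_scale; first exact: cont_const.
apply: vcont_add.
  apply: vcont_scale => //. apply: cont_mul.
    apply: cont_sub; first exact: cont_dotv. apply: (cont_dotv (w := fun _ => ths)) => // i; exact: cont_const.
  apply: continuous_Rinv_comp.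
    apply: cont_add; first exact: cont_const. apply: cont_mul; first exact: cont_const.
    exact: cont_dotv.
  rewrite NtE => H0. have H1 : 1 + mu * dotv (phi s) (phi s) = 0 := H0. have ? := dotv_ge0 (phi s). nra.
rewrite /Bterm. apply: vcont_sum => k. apply: vcont_scale; last exact: vcont_const.
apply: cont_mul; last exact: cont_const.
apply: cont_sub; last exact: cont_const.
apply: (cont_dotv (u := fun _ => phi (ts k))) => // i; exact: cont_const.
Qed.

Lemma cont_V (y : R -> 'cV[R]_(n + n)) s : vcont y s -> continuous (fun t => Vf (y t)) s.
Proof.
move=> Hy.
have He : vcont (fun t => ee (y t)) s.
  rewrite /ee. apply: vcont_sub. exact: vcont_u. exact: vcont_const.
have Hv : vcont (fun t => ve (y t)) s.
  rewrite /ve. apply: vcont_sub. exact: vcont_d. exact: vcont_const.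
rewrite /Vf. apply: cont_add; last first.
  apply: cont_mul; first exact: cont_const. rewrite /Qf. apply: cont_sum => k.
  apply: cont_mul; first exact: cont_const.
  apply: cont_mul; apply: (cont_dotv (u := fun _ => phi (ts k))) => // i; exact: cont_const.
apply: cont_add; last by apply: cont_mul; [exact: cont_dotv | exact: cont_const].
apply: cont_sub; exact: cont_dotv.
Qed.
Lemma der_explin (l u : R) : is_derive (fun t => exp (l * t)) u (l * exp (l * u)).
Proof.
have H1 : is_derive (fun t : R => l * t) u l.
  apply: (der_eq _ (is_derive_scal (fun t => t) u l 1 (is_derive_id u))). exact: Rmult_1_r.
exact: (is_derive_comp exp (fun t => l * t) u _ _ (is_derive_exp _) H1).
Qed.

Definition lam c := Num.min (gamma * ((1 + mu * Phi)^-1 * c)) (beta / 2) / 3 / c2.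

Lemma decay c t0 x0 x : 0 < c ->
  (forall e, c * dotv e e <= \sum_(k < N) dotv (phi (ts k)) e ^+ 2) ->
  piecewise_continuous phi -> 0 <= t0 -> is_solution FF t0 x0 x ->
  forall T, t0 <= T -> exp (lam c * T) * Vf (x T) <= exp (lam c * t0) * Vf x0.
Proof.
move=> c0 Hc Hpc Ht0 Hsol T HT.
have HT0 : 0 <= T by apply: le_trans HT.
have [L [HL _]] := Hpc T HT0.
pose y := fun t => x (Rmax t t0).
have Hyc : forall u, t0 <= u -> vcont y u.
  move=> u Hu i. apply: (sol_cont Hsol). exact/RleP.
have HyT : y T = x T by rewrite /y Rmax_left //; apply/RleP.
have Hy0 : y t0 = x0 by rewrite /y Rmax_left; [case: Hsol | apply: Rle_refl].
rewrite -HyT -Hy0.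
pose h := fun u => exp (lam c * u) * Vf (y u).
suff : h T <= h t0 by [].
apply/RleP. apply: (mono_exc (h := h) (L := L)).
- exact/RleP.
- move=> u [Hu1 Hu2]. apply/continuity_pt_filterlim.
  change (continuous (fun t => exp (lam c * t) * Vf (y t)) u). apply: cont_mul.
    exact: ex_derive_continuous (ex_intro _ _ (der_explin (lam c) u)).
  apply: cont_V. apply: Hyc. exact/RleP.
move=> u [Hu1 Hu2] Hn.
have Hu0 : 0 < u by apply: le_lt_trans Ht0 _; apply/RltP.
have Hphi : vcont phi u by apply: HL => //; apply/RleP; apply: Rlt_le.
have Hx : vcont x u.
  move=> i. apply: (continuous_ext_loc _ _ _ _ (Hyc u _ i)); last by apply/RleP; apply: Rlt_le.
  exists (mkposreal _ (Rlt_Rminus _ _ Hu1)) => b Hbb.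
  have Hbb' : Rlt (Rabs (Rminus b u)) (Rminus u t0) := Hbb.
  have Hb2 := Rabs_def2 _ _ Hbb'. rewrite /y Rmax_left //. Lra.lra.
have Hf := vcont_F Hx Hphi.
have Hd : vder y u (FF u (y u)).
  move=> i. have -> : y u = x u by rewrite /y Rmax_left //; apply: Rlt_le.
  exact: (sol_der Hsol Hu1 (Hf i)).
have HV := der_V Hd.
have HB := dV_bound2 u (y u) c0 Hc.
exists (lam c * exp (lam c * u) * Vf (y u) + exp (lam c * u) * dVf (y u) (FF u (y u))); split.
  exact: der_mul (der_explin _ u) HV.
apply/RleP.
have He := exp_pos (lam c * u). have He' : 0 < exp (lam c * u) by apply/RltP.
have E : lam c * exp (lam c * u) * Vf (y u) + exp (lam c * u) * dVf (y u) (FF u (y u)) =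
  exp (lam c * u) * (lam c * Vf (y u) + dVf (y u) (FF u (y u))) by ring.
rewrite E R0E. apply: mulr_ge0_le0; first exact: ltW.
move: HB. rewrite /lam. lra.
Qed.
Definition NN (z : 'cV[R]_(n + n)) := dotv (z - col_mx ths ths) (z - col_mx ths ths).
Lemma NN_split z : NN z = dotv (ee z) (ee z) + dotv (ve z) (ve z).
Proof.
rewrite /NN /dotv big_split_ord /=. congr (_ + _); apply: eq_bigr => i _.
  by rewrite mxE opp_col_mx col_mxEu /ee !mxE.
by rewrite mxE opp_col_mx col_mxEd /ve !mxE.
Qed.
Lemma NN_ge0 z : 0 <= NN z.
Proof. exact: dotv_ge0. Qed.

Lemma lam_gt0 c : 0 < c -> 0 < lam c.
Proof.
hyps. move=> c0. rewrite /lam. have ? := c2_gt0. have ? := Phi_ge0.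
have hq : 0 < gamma * ((1 + mu * Phi)^-1 * c).
  apply: mulr_gt0 => //; apply: mulr_gt0 => //; rewrite invr_gt0; nra.
apply: divr_gt0 => //. apply: divr_gt0; last lra.
rewrite lt_min hq /=; lra.
Qed.

Lemma main_bound c t0 x0 x T : 0 < c ->
  (forall e, c * dotv e e <= \sum_(k < N) dotv (phi (ts k)) e ^+ 2) ->
  piecewise_continuous phi -> 0 <= t0 -> is_solution FF t0 x0 x -> t0 <= T ->
  exp (lam c * (T - t0)) * NN (x T) <= 6 * c2 * NN x0.
Proof.
move=> c0 Hc Hpc Ht0 Hsol HT.
have H := decay c0 Hc Hpc Ht0 Hsol HT.
have Hexp : exp (lam c * t0 + lam c * (T - t0)) = exp (lam c * t0) * exp (lam c * (T - t0)) := exp_plus _ _.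
rewrite ?RmultE ?RminusE ?RplusE in H Hexp *.
rewrite (_ : lam c * T = lam c * t0 + lam c * (T - t0)) in H; last by ring.
rewrite Hexp -mulrA in H.
have He0 : 0 < exp (lam c * t0) by apply/RltP; exact: exp_pos.
have He1 : 0 < exp (lam c * (T - t0)) by apply/RltP; exact: exp_pos.
rewrite ler_pM2l // in H.
have H1 := Vlow (x T). have H2 := Vup x0. rewrite -!NN_split in H1 H2.
have H3 : exp (lam c * (T - t0)) * (NN (x T) / 6) <= exp (lam c * (T - t0)) * Vf (x T).
  by apply: ler_wpM2l => //; exact: ltW.
lra.
Qed.
Lemma exp_ge (y : R) : 1 + y <= exp y.
Proof. apply/RleP. exact: exp_ineq1_le. Qed.

Lemma UGAS_FF : \rank (Dmat phi ts) = n -> piecewise_continuous phi -> UGAS FF (col_mx ths ths).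
Proof.
hyps. move=> Hr Hpc. have [c [c0 Hc]] := rank_lb Hr.
have hc2 := c2_gt0. have hl := lam_gt0 c0.
have h6 : 0 < 6 * c2 by lra.
pose K := Num.sqrt (6 * c2).
have hK : 0 < K by rewrite sqrtr_gt0.
have Hvn : forall z, vnorm (z - col_mx ths ths) = Num.sqrt (NN z) by move=> z; rewrite /vnorm RsqrtE.
have Hdec : forall t0 x0 x t, 0 <= t0 -> is_solution FF t0 x0 x -> t0 <= t ->
    (1 + lam c * (t - t0)) * NN (x t) <= 6 * c2 * NN x0.
  move=> t0 x0 x t Ht0 Hsol Ht. apply: le_trans (main_bound c0 Hc Hpc Ht0 Hsol Ht).
  apply: ler_wpM2r; first exact: NN_ge0.
  have := exp_ge (lam c * (t - t0)). by rewrite ?RmultE ?RminusE.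
split.
- exists (fun r => K * r). split.
    split; first by rewrite mulr0.
    split; first by move=> s _; apply: cont_mul; [exact: cont_const | exact: continuous_id].
    split; first by move=> s1 s2 _ H; rewrite ltr_pM2l.
    move=> c'. exists (`|c'| / K). split; first by apply: divr_ge0; [exact: normr_ge0 | exact: ltW].
    rewrite mulrCA divff ?mulr1 ?gt_eqF //. exact: ler_norm.
  move=> t0 x0 x Ht0 Hsol t Ht. rewrite !Hvn /K -sqrtrM; last exact: ltW.
  rewrite ler_sqrt; last by apply: mulr_ge0; [exact: ltW | exact: NN_ge0].
  have H := Hdec t0 x0 x t Ht0 Hsol Ht.
  have H1 : 0 <= lam c * (t - t0) by apply: mulr_ge0; [exact: ltW | rewrite subr_ge0].
  have H2 := NN_ge0 (x t). nra.
move=> r sig r0 s0.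
pose A := 6 * c2 * r ^+ 2.
have hA : 0 < A by rewrite /A; apply: mulr_gt0 => //; exact: exprn_gt0.
have hs2 : 0 < sig ^+ 2 by exact: exprn_gt0.
exists (A / (sig ^+ 2 * lam c) + 1). split.
  have : 0 < A / (sig ^+ 2 * lam c) by apply: divr_gt0 => //; exact: mulr_gt0.
  lra.
move=> t0 x0 x Ht0 Hsol Hr0 t Ht. rewrite Hvn.
have Hn0 : NN x0 <= r ^+ 2.
  move: Hr0; rewrite Hvn => Hr0.
  rewrite -(sqr_sqrtr (NN_ge0 x0)). rewrite ler_sqr //; [exact: sqrtr_ge0 | exact: ltW].
have Htt : t0 <= t.
  apply: le_trans Ht. rewrite lerDl. apply: addr_ge0; last lra.
  by apply: divr_ge0; [exact: ltW | apply: mulr_ge0; exact: ltW].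
have H := Hdec t0 x0 x t Ht0 Hsol Htt.
have HT : A / (sig ^+ 2 * lam c) + 1 <= t - t0 by lra.
have HE : A / sig ^+ 2 <= 1 + lam c * (t - t0).
  have : lam c * (A / (sig ^+ 2 * lam c) + 1) <= lam c * (t - t0) by apply: ler_wpM2l => //; exact: ltW.
  have -> : lam c * (A / (sig ^+ 2 * lam c) + 1) = A / sig ^+ 2 + lam c.
    field. apply/andP; split; [exact: lt0r_neq0 | exact: lt0r_neq0].
  lra.
have H2 := NN_ge0 (x t).
have H3 : NN (x t) * (A / sig ^+ 2) <= A.
  apply: le_trans (_ : NN (x t) * (1 + lam c * (t - t0)) <= A).
    by apply: ler_wpM2l.
  rewrite mulrC. apply: le_trans H _. rewrite /A. apply: ler_wpM2l => //; exact: ltW.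
have H4 : NN (x t) <= sig ^+ 2.
  have H5 : NN (x t) * (A / sig ^+ 2) * (sig ^+ 2 / A) <= A * (sig ^+ 2 / A).
    apply: ler_wpM2r => //; apply: divr_ge0; exact: ltW.
  have E1 : NN (x t) * (A / sig ^+ 2) * (sig ^+ 2 / A) = NN (x t).
    field. apply/andP; split; exact: lt0r_neq0.
  have E2 : A * (sig ^+ 2 / A) = sig ^+ 2 by field; exact: lt0r_neq0.
  by rewrite E1 E2 in H5.
rewrite -(ger0_norm (ltW s0)) -sqrtr_sqr ler_sqrt //; exact: ltW.
Qed.
End Alg.

Theorem theorem4 (n N : nat) (thetastar : 'cV[R]_n) (phi : R -> 'cV[R]_n) (M : R)
    (ts : 'I_N -> R) (beta gamma mu : R) :
  piecewise_continuous phi ->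
  0 < M -> (forall t : R, 0 <= t -> vnorm (phi t) <= M) ->
  (forall k : 'I_N, 0 <= ts k) ->
  \rank (Dmat phi ts) = n ->
  0 < beta -> 0 < gamma -> 0 < mu -> 2 * gamma / mu <= beta ->
  UGAS (sysF phi thetastar ts beta gamma mu) (col_mx thetastar thetastar).
Proof.
move=> Hpc _ _ _ Hr Hb Hg Hm Hbg.
by apply: UGAS_FF.
Qed.
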